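(* Let $F_1,F_2\in\mathbb C^{(2n+m)\times(n+m)}$ be nonzero, $\alpha:=\|F_1\|_2$, $\beta:=\|F_2\|_2$, and $g(\gamma):=\big\|[\,\gamma F_1,\ F_2/\gamma\,]\big\|_2^2$ for $\gamma>0$. Then in the minimization problem $\min_{0<\gamma<\infty}g(\gamma)$ the infinite search interval can be replaced by the closed interval $[\gamma_{lo},\gamma_{up}]=\big[\sqrt{\beta/(2\alpha)},\sqrt{2\beta/\alpha}\big]$, i.e. $\inf_{\gamma>0}g(\gamma)=\min_{\gamma\in[\gamma_{lo},\gamma_{up}]}g(\gamma)$. Moreover, $g(\gamma^{gm})$ with $\gamma^{gm}:=\sqrt{\beta/\alpha}$ is an upper bound for this minimum.
   Context: $\|\cdot\|_2$ denotes the spectral norm (largest singular value); $[\,\gamma F_1,\ F_2/\gamma\,]$ is the horizontal concatenation of the two matrices. *)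

(* Defs.v *)
From HB Require Import structures.
From mathcomp Require Import all_boot all_order all_algebra.
From mathcomp Require Import complex.
From mathcomp Require Import classical_sets boolp reals.
Set Implicit Arguments. Unset Strict Implicit. Unset Printing Implicit Defensive.
Import Order.TTheory GRing.Theory Num.Theory.
Local Open Scope ring_scope.
Local Open Scope classical_set_scope.

Definition vnorm (R : realType) (k : nat) (x : 'cV[R[i]]_k) : R :=
  Num.sqrt (\sum_(j < k) (complex.Re (x j 0) ^+ 2 + complex.Im (x j 0) ^+ 2)).

Definition specnorm (R : realType) (p q : nat) (A : 'M[R[i]]_(p, q)) : R :=
  sup [set vnorm (A *m x) | x in [set x : 'cV[R[i]]_q | vnorm x <= 1]].

Definition rC (R : realType) (r : R) : R[i] := complex.Complex r 0.

(* Main.v *)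
Require Import Defs.
From HB Require Import structures.
From mathcomp Require Import all_boot all_order all_algebra.
From mathcomp Require Import complex.
From mathcomp Require Import classical_sets boolp reals.
From mathcomp Require Import all_classical all_reals all_analysis.
From mathcomp Require Import ring lra.
Import Order.TTheory GRing.Theory Num.Theory.
Import numFieldNormedType.Exports.
Set Implicit Arguments. Unset Strict Implicit. Unset Printing Implicit Defensive.
Local Open Scope ring_scope.

Section S.
Variable R : realType.
Definition nc (z : R[i]) : R := complex.Re z ^+ 2 + complex.Im z ^+ 2.
Lemma ncM (z w : R[i]) : nc (z * w) = nc z * nc w.
Proof. case: z => a b; case: w => c d; rewrite /nc /=. ring. Qed.
Lemma nc_ge0 z : 0 <= nc z.
Proof. by rewrite /nc addr_ge0 // sqr_ge0. Qed.
Lemma ncrC r : nc (rC r) = r ^+ 2.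
Proof. by rewrite /nc /= expr0n /= addr0. Qed.
Lemma rCB (a b : R) : rC a - rC b = rC (a - b).
Proof. by rewrite /rC /=; congr Complex; rewrite /= ?subr0 ?oppr0 ?addr0. Qed.

Definition Sq k (x : 'cV[R[i]]_k) := \sum_(j < k) nc (x j 0).
Definition ip k (x y : 'cV[R[i]]_k) := \sum_(j < k)
  (complex.Re (x j 0) * complex.Re (y j 0) + complex.Im (x j 0) * complex.Im (y j 0)).
Lemma Sq_ge0 k (x : 'cV[R[i]]_k) : 0 <= Sq x.
Proof. by apply: sumr_ge0 => j _; apply: nc_ge0. Qed.
Lemma vnormE k (x : 'cV[R[i]]_k) : vnorm x = Num.sqrt (Sq x).
Proof. by []. Qed.
Lemma vnorm_ge0 k (x : 'cV[R[i]]_k) : 0 <= vnorm x.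
Proof. exact: sqrtr_ge0. Qed.
Lemma vnorm_sqr k (x : 'cV[R[i]]_k) : vnorm x ^+ 2 = Sq x.
Proof. by rewrite vnormE sqr_sqrtr // Sq_ge0. Qed.

Lemma SqD k (x y : 'cV[R[i]]_k) : Sq (x + y) = Sq x + Sq y + 2 * ip x y.
Proof.
rewrite /Sq /ip mulr_sumr -!big_split /=; apply: eq_bigr => j _.
rewrite !mxE /nc; case: (x j 0) => a b; case: (y j 0) => c d /=. ring.
Qed.

Lemma ip_am k (x y : 'cV[R[i]]_k) l : 0 < l -> 2 * ip x y <= l * Sq x + Sq y / l.
Proof.
move=> l0; rewrite /Sq /ip mulr_sumr mulr_sumr mulr_suml -big_split /=.
apply: ler_sum => j _; rewrite /nc; set a := complex.Re _; set b := complex.Im _.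
set c := complex.Re _; set d := complex.Im _.
have li0 : 0 < l^-1 by rewrite invr_gt0.
have lli : l * l^-1 = 1 by rewrite mulfV // gt_eqF.
have h : 0 <= l^-1 * ((l * a - c) ^+ 2 + (l * b - d) ^+ 2).
  by apply: mulr_ge0; [exact: ltW | rewrite addr_ge0 // sqr_ge0].
rewrite -subr_ge0.
suff -> : l * (a ^+ 2 + b ^+ 2) + (c ^+ 2 + d ^+ 2) / l - 2 * (a * c + b * d) =
   l^-1 * ((l * a - c) ^+ 2 + (l * b - d) ^+ 2) by [].
by field; rewrite gt_eqF.
Qed.

Lemma ipC k (x y : 'cV[R[i]]_k) : ip x y = ip y x.
Proof. by apply: eq_bigr => j _; rewrite mulrC [_ * complex.Im _]mulrC. Qed.

Lemma CS0 k (x y : 'cV[R[i]]_k) : Sq x = 0 -> ip x y <= 0.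
Proof.
move=> x0; rewrite leNgt; apply/negP => ip0.
have hS := Sq_ge0 y.
have l0 : 0 < Sq y / ip x y + 1 by rewrite ltr_pwDr // divr_ge0 // ltW.
have := ip_am x y l0; rewrite x0 mulr0 add0r.
set l := _ + 1 => h.
have : Sq y / l < ip x y.
  rewrite ltr_pdivrMr //. rewrite /l mulrDr mulr1 mulrCA mulfV ?gt_eqF // mulr1.
  by rewrite ltrDl.
lra.
Qed.

Lemma CS k (x y : 'cV[R[i]]_k) : ip x y <= vnorm x * vnorm y.
Proof.
have [x0|x0] := eqVneq (Sq x) 0.
  by rewrite (le_trans (CS0 y x0)) // mulr_ge0 // vnorm_ge0.
have [y0|y0] := eqVneq (Sq y) 0.
  by rewrite ipC (le_trans (CS0 x y0)) // mulr_ge0 // vnorm_ge0.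
have sx0 : 0 < vnorm x by rewrite vnormE sqrtr_gt0 lt_def x0 Sq_ge0.
have sy0 : 0 < vnorm y by rewrite vnormE sqrtr_gt0 lt_def y0 Sq_ge0.
have l0 : 0 < vnorm y / vnorm x by rewrite divr_gt0.
have := ip_am x y l0; rewrite -!vnorm_sqr.
have -> : vnorm y / vnorm x * vnorm x ^+ 2 + vnorm y ^+ 2 / (vnorm y / vnorm x)
   = 2 * (vnorm x * vnorm y) by field; rewrite ?gt_eqF.
lra.
Qed.

Lemma vnormD k (x y : 'cV[R[i]]_k) : vnorm (x + y) <= vnorm x + vnorm y.
Proof.
rewrite -(ger0_norm (vnorm_ge0 (x + y))) -(ger0_norm (addr_ge0 (vnorm_ge0 x) (vnorm_ge0 y))).
rewrite -ler_sqr ?nnegrE ?vnorm_ge0 ?addr_ge0 ?vnorm_ge0 //.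
rewrite !ger0_norm ?vnorm_ge0 ?addr_ge0 ?vnorm_ge0 //.
rewrite vnorm_sqr SqD sqrrD !vnorm_sqr.
have := CS x y; lra.
Qed.

Lemma SqZ k z (v : 'cV[R[i]]_k) : Sq (z *: v) = nc z * Sq v.
Proof. by rewrite /Sq mulr_sumr; apply: eq_bigr => j _; rewrite mxE ncM. Qed.
Lemma vnormZ k z (v : 'cV[R[i]]_k) : vnorm (z *: v) = Num.sqrt (nc z) * vnorm v.
Proof. by rewrite !vnormE SqZ sqrtrM // nc_ge0. Qed.
Lemma vnormZr k r (v : 'cV[R[i]]_k) : vnorm (rC r *: v) = `|r| * vnorm v.
Proof. by rewrite vnormZ ncrC sqrtr_sqr. Qed.
Lemma vnorm0 k : vnorm (0 : 'cV[R[i]]_k) = 0.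
Proof.
rewrite vnormE /Sq big1 ?sqrtr0 // => j _; rewrite mxE /nc /=.
by rewrite expr0n /= addr0.
Qed.
Lemma vnorm_sum k q (v : 'I_q -> 'cV[R[i]]_k) :
  vnorm (\sum_(j < q) v j) <= \sum_(j < q) vnorm (v j).
Proof.
apply: (big_ind2 (fun a b => vnorm a <= b)).
- by rewrite vnorm0.
- move=> a1 b1 a2 b2 h1 h2; exact: le_trans (vnormD _ _) (lerD h1 h2).
- by [].
Qed.
Lemma mulmx_col p q (A : 'M[R[i]]_(p, q)) (x : 'cV[R[i]]_q) :
  A *m x = \sum_(j < q) x j 0 *: col j A.
Proof.
apply/matrixP => i k; rewrite !mxE summxE; apply: eq_bigr => j _.
by rewrite !mxE (ord1 k) mulrC.
Qed.
Lemma nc_le k (x : 'cV[R[i]]_k) j : Num.sqrt (nc (x j 0)) <= vnorm x.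
Proof.
rewrite vnormE ler_sqrt ?Sq_ge0 // /Sq (bigD1 j) //= lerDl.
by apply: sumr_ge0 => i _; apply: nc_ge0.
Qed.
Definition Cb p q (A : 'M[R[i]]_(p, q)) := \sum_(j < q) vnorm (col j A).
Lemma Cb_bound p q (A : 'M[R[i]]_(p, q)) x : vnorm (A *m x) <= Cb A * vnorm x.
Proof.
rewrite mulmx_col (le_trans (vnorm_sum _)) // /Cb mulr_suml.
apply: ler_sum => j _; rewrite vnormZ mulrC ler_wpM2l ?vnorm_ge0 //.
exact: nc_le.
Qed.
Lemma vnorm_col q1 q2 (u : 'cV[R[i]]_q1) (d : 'cV[R[i]]_q2) :
  vnorm (col_mx u d) ^+ 2 = vnorm u ^+ 2 + vnorm d ^+ 2.
Proof.
rewrite !vnorm_sqr /Sq big_split_ord /=.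
by congr (_ + _); apply: eq_bigr => j _; rewrite ?col_mxEu ?col_mxEd.
Qed.

Lemma Cb_ge0 p q (A : 'M[R[i]]_(p, q)) : 0 <= Cb A.
Proof. by apply: sumr_ge0 => j _; apply: vnorm_ge0. Qed.
Lemma spec_hasub p q (A : 'M[R[i]]_(p, q)) :
  has_ubound [set vnorm (A *m x) | x in [set x : 'cV[R[i]]_q | vnorm x <= 1]].
Proof.
exists (Cb A) => y [x /= x1 <-].
apply: le_trans (Cb_bound A x) _.
by rewrite -[leRHS]mulr1 ler_wpM2l // Cb_ge0.
Qed.
Lemma spec_ub p q (A : 'M[R[i]]_(p, q)) x : vnorm x <= 1 -> vnorm (A *m x) <= specnorm A.
Proof. by move=> x1; apply: (ub_le_sup (spec_hasub A)); exists x. Qed.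
Lemma spec_ge0 p q (A : 'M[R[i]]_(p, q)) : 0 <= specnorm A.
Proof. apply: le_trans (spec_ub A (x := 0) _); rewrite ?vnorm0 //; exact: vnorm_ge0. Qed.
Lemma spec_le p q (A : 'M[R[i]]_(p, q)) c :
  (forall x, vnorm x <= 1 -> vnorm (A *m x) <= c) -> specnorm A <= c.
Proof.
move=> h; apply: ge_sup.
  by exists (vnorm (A *m 0)); exists 0 => //=; rewrite vnorm0.
by move=> y [x /= x1 <-]; apply: h.
Qed.
Lemma spec_bound p q (A : 'M[R[i]]_(p, q)) x : vnorm (A *m x) <= specnorm A * vnorm x.
Proof.
have [x0|x0] := eqVneq (vnorm x) 0.
  by rewrite x0 mulr0; apply: le_trans (Cb_bound A x) _; rewrite x0 mulr0.
have sx : 0 < vnorm x by rewrite lt_def x0 vnorm_ge0.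
have := spec_ub A (x := rC (vnorm x)^-1 *: x).
rewrite vnormZr -scalemxAr vnormZr ger0_norm ?invr_ge0 ?vnorm_ge0 //.
rewrite mulVf // lexx => /(_ isT).
by rewrite mulrC ler_pdivrMr.
Qed.

Lemma specZ p q (A : 'M[R[i]]_(p, q)) c : specnorm (rC c *: A) = `|c| * specnorm A.
Proof.
apply/eqP; rewrite eq_le; apply/andP; split.
  apply: spec_le => x x1; rewrite -scalemxAl vnormZr ler_wpM2l //.
  exact: spec_ub.
have [->|c0] := eqVneq c 0; first by rewrite normr0 mul0r spec_ge0.
have nc0 : 0 < `|c| by rewrite normr_gt0.
rewrite mulrC -ler_pdivlMr //; apply: spec_le => x x1.
rewrite ler_pdivlMr // mulrC -vnormZr scalemxAl; exact: spec_ub.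
Qed.
Lemma spec_add p q (A B : 'M[R[i]]_(p, q)) : specnorm (A + B) <= specnorm A + specnorm B.
Proof.
apply: spec_le => x x1; rewrite mulmxDl (le_trans (vnormD _ _)) //.
by apply: lerD; apply: spec_ub.
Qed.
Lemma spec_row_lo p q1 q2 (A : 'M[R[i]]_(p, q1)) (B : 'M[R[i]]_(p, q2)) :
  specnorm A <= specnorm (row_mx A B) /\ specnorm B <= specnorm (row_mx A B).
Proof.
split; apply: spec_le => x x1.
  have := spec_ub (row_mx A B) (x := col_mx x 0).
  rewrite mul_row_col mulmx0 addr0; apply.
  rewrite -(ler_pXn2r (n := 2)) ?nnegrE ?vnorm_ge0 // vnorm_col vnorm0 expr1n.
  by rewrite expr0n /= addr0 -(expr1n _ 2) ler_pXn2r ?nnegrE ?vnorm_ge0.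
have := spec_ub (row_mx A B) (x := col_mx 0 x).
rewrite mul_row_col mulmx0 add0r; apply.
rewrite -(ler_pXn2r (n := 2)) ?nnegrE ?vnorm_ge0 // vnorm_col vnorm0 expr1n.
by rewrite expr0n /= add0r -(expr1n _ 2) ler_pXn2r ?nnegrE ?vnorm_ge0.
Qed.
Lemma spec_row_up p q1 q2 (A : 'M[R[i]]_(p, q1)) (B : 'M[R[i]]_(p, q2)) :
  specnorm (row_mx A B) <= Num.sqrt (specnorm A ^+ 2 + specnorm B ^+ 2).
Proof.
apply: spec_le => x.
have [u [d ->]] : exists u d, x = col_mx u d.
  by exists (usubmx x), (dsubmx x); rewrite vsubmxK.
move=> x1; rewrite mul_row_col.
have h2 : vnorm u ^+ 2 + vnorm d ^+ 2 <= 1.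
  by rewrite -vnorm_col -(expr1n _ 2) ler_pXn2r ?nnegrE ?vnorm_ge0.
apply: le_trans (vnormD _ _) _.
apply: (le_trans (lerD (spec_bound A u) (spec_bound B d))).
set a := specnorm A; set b := specnorm B.
set su := vnorm u; set sd := vnorm d.
have a0 : 0 <= a by apply: spec_ge0.
have b0 : 0 <= b by apply: spec_ge0.
have su0 : 0 <= su by apply: vnorm_ge0.
have sd0 : 0 <= sd by apply: vnorm_ge0.
rewrite -(ler_pXn2r (n := 2)) ?nnegrE ?sqrtr_ge0 ?addr_ge0 ?mulr_ge0 //.
rewrite sqr_sqrtr ?addr_ge0 ?sqr_ge0 //.
have h3 : 0 <= (a * sd - b * su) ^+ 2 by apply: sqr_ge0.
have h4 : (a ^+ 2 + b ^+ 2) * (su ^+ 2 + sd ^+ 2) <= a ^+ 2 + b ^+ 2.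
  by rewrite -[leRHS]mulr1 ler_wpM2l // addr_ge0 // sqr_ge0.
have -> : (a * su + b * sd) ^+ 2 = (a ^+ 2 + b ^+ 2) * (su ^+ 2 + sd ^+ 2) - (a * sd - b * su) ^+ 2 by ring.
lra.
Qed.
Lemma spec_row_up2 p q1 q2 (A : 'M[R[i]]_(p, q1)) (B : 'M[R[i]]_(p, q2)) :
  specnorm (row_mx A B) <= specnorm A + specnorm B.
Proof.
apply: le_trans (spec_row_up A B) _.
have a0 := spec_ge0 A; have b0 := spec_ge0 B.
set a := specnorm A in a0 *; set b := specnorm B in b0 *.
rewrite -(ler_pXn2r (n := 2)) ?nnegrE ?sqrtr_ge0 ?addr_ge0 //.
rewrite sqr_sqrtr ?addr_ge0 ?sqr_ge0 // sqrrD.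
have : 0 <= a * b by apply: mulr_ge0.
lra.
Qed.
End S.

Local Open Scope classical_set_scope.
Section T.
Variable R : realType.
Variables (p q1 q2 : nat) (F1 : 'M[R[i]]_(p, q1)) (F2 : 'M[R[i]]_(p, q2)).
Definition N (g : R) := specnorm (row_mx (rC g *: F1) (rC g^-1 *: F2)).
Lemma N_lo g : `|g| * specnorm F1 <= N g /\ `|g^-1| * specnorm F2 <= N g.
Proof. by rewrite -!specZ; apply: spec_row_lo. Qed.
Lemma N_up g : N g <= Num.sqrt ((`|g| * specnorm F1) ^+ 2 + (`|g^-1| * specnorm F2) ^+ 2).
Proof. by rewrite -!specZ; apply: spec_row_up. Qed.
Lemma N_lip s t : N s <= N t + (`|s - t| * specnorm F1 + `|s^-1 - t^-1| * specnorm F2).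
Proof.
rewrite /N.
set M := row_mx (rC t *: F1) _.
have -> : row_mx (rC s *: F1) (rC s^-1 *: F2) =
   M + row_mx (rC (s - t) *: F1) (rC (s^-1 - t^-1) *: F2).
  by rewrite /M add_row_mx -!rCB !scalerBl [_ + (_ - _)]addrC subrK [_ + (_ - _)]addrC subrK.
apply: Order.POrderTheory.le_trans (spec_add _ _) _; rewrite lerD2l -!specZ; exact: spec_row_up2.
Qed.

Lemma aux_bd (x a e : R) : 0 <= x -> 0 <= a -> 0 < e -> x <= e / (2 * (a + 1)) -> x * a <= e / 2.
Proof.
move=> x0 a0 e0 hx.
have h1 : x * a <= x * (a + 1) by rewrite ler_wpM2l // lerDl.
apply: le_trans h1 _.
have -> : e / 2 = e / (2 * (a + 1)) * (a + 1) by field; rewrite ?paddr_eq0 ?oner_eq0 ?andbF //; lra.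
by rewrite ler_wpM2r // addr_ge0.
Qed.

Lemma fin_bd (x y u v u' v' e : R) : x <= y + (u + v) -> y <= x + (u' + v') ->
  u <= e / 2 -> v <= e / 2 -> u' <= e / 2 -> v' <= e / 2 -> `|x - y| <= e.
Proof. move=> *; rewrite ler_norml; apply/andP; split; lra. Qed.

Lemma N_cont t0 : 0 < t0 -> {for t0, continuous N}.
Proof.
move=> t0p; apply/cvgrPdist_le => e e0.
have a0 : 0 <= specnorm F1 by apply: spec_ge0.
have b0 : 0 <= specnorm F2 by apply: spec_ge0.
have e1 : 0 < e / (2 * (specnorm F1 + 1)) by rewrite divr_gt0 // mulr_gt0 // ltr_pwDr.
have e2 : 0 < e / (2 * (specnorm F2 + 1)) by rewrite divr_gt0 // mulr_gt0 // ltr_pwDr.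
have H1 : \forall t \near t0, `|t0 - t| <= e / (2 * (specnorm F1 + 1)).
  by move: (@cvg_id _ (nbhs t0)) => /cvgrPdist_le /(_ _ e1).
have H2 : \forall t \near t0, `|t0^-1 - t^-1| <= e / (2 * (specnorm F2 + 1)).
  by move: (inv_continuous (negbT (gt_eqF t0p))) => /cvgrPdist_le /(_ _ e2).
near=> t.
have h1 : `|t0 - t| <= e / (2 * (specnorm F1 + 1)) by near: t.
have h2 : `|t0^-1 - t^-1| <= e / (2 * (specnorm F2 + 1)) by near: t.
have k1 := aux_bd (normr_ge0 _) a0 e0 h1.
have k2 := aux_bd (normr_ge0 _) b0 e0 h2.
have l1 := N_lip t0 t.
have l2 := N_lip t t0.
rewrite (distrC t) (distrC t^-1) in l2.
exact: (fin_bd l1 l2 k1 k2 k1 k2).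
Unshelve. all: end_near.
Qed.
End T.

Section U.
Variable R : realType.
Lemma sq_le (x y : R) : 0 <= x -> x <= y -> x ^+ 2 <= y ^+ 2.
Proof. move=> x0 xy; rewrite ler_pXn2r // nnegrE //; exact: le_trans xy. Qed.

Lemma ub_gm (a b s N : R) : 0 < a -> 0 < b -> 0 < s -> s ^+ 2 = b / a ->
  N <= Num.sqrt ((`|s| * a) ^+ 2 + (`|s^-1| * b) ^+ 2) -> 0 <= N -> N ^+ 2 <= 2 * a * b.
Proof.
move=> a0 b0 s0 hs hN N0.
have := sq_le N0 hN; rewrite sqr_sqrtr ?addr_ge0 ?sqr_ge0 //.
have si : 0 < s^-1 by rewrite invr_gt0.
rewrite (ger0_norm (ltW s0)) (ger0_norm (ltW si)) !exprMn exprVn hs.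
have -> : b / a * a ^+ 2 + (b / a)^-1 * b ^+ 2 = 2 * a * b.
  by field; rewrite ?gt_eqF.
by [].
Qed.

Lemma lo_small (a b g l N : R) : 0 < a -> 0 < b -> 0 < g -> g <= l -> 0 <= l ->
  l ^+ 2 = b / (2 * a) -> `|g^-1| * b <= N -> 2 * a * b <= N ^+ 2.
Proof.
move=> a0 b0 g0 gl l0 hl hN.
apply: le_trans (sq_le _ hN); last by apply: mulr_ge0; [exact: normr_ge0 | exact: ltW].
have gi : 0 < g^-1 by rewrite invr_gt0.
rewrite (ger0_norm (ltW gi)) exprMn exprVn.
have g20 : 0 < g ^+ 2 by rewrite exprn_gt0.
rewrite [_ * b ^+ 2]mulrC ler_pdivlMr //.
have hg : g ^+ 2 <= b / (2 * a) by rewrite -hl; apply: sq_le => //; exact: ltW.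
have h2 : 0 <= 2 * a * b by rewrite !mulr_ge0 ?ltW.
apply: le_trans (ler_wpM2l h2 hg) _.
have -> : 2 * a * b * (b / (2 * a)) = b ^+ 2 by field; rewrite ?gt_eqF.
by [].
Qed.

Lemma hi_big (a b g u N : R) : 0 < a -> 0 < b -> u <= g -> 0 <= u ->
  u ^+ 2 = 2 * b / a -> `|g| * a <= N -> 2 * a * b <= N ^+ 2.
Proof.
move=> a0 b0 ug u0 hu hN.
have g0 : 0 <= g by exact: le_trans ug.
apply: le_trans (sq_le _ hN); last by apply: mulr_ge0; [exact: normr_ge0 | exact: ltW].
rewrite ger0_norm // exprMn.
have hg : 2 * b / a <= g ^+ 2 by rewrite -hu; apply: sq_le.
have a2 : 0 <= a ^+ 2 by apply: sqr_ge0.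
apply: le_trans (ler_wpM2r a2 hg).
have -> : 2 * b / a * a ^+ 2 = 2 * a * b by field; rewrite ?gt_eqF.
by [].
Qed.
End U.

Theorem lemma10p1 (R : realType) (n m : nat)
  (F1 F2 : 'M[R[i]]_(2 * n + m, n + m)) :
  F1 != 0 -> F2 != 0 ->
  let alpha := specnorm F1 in
  let beta := specnorm F2 in
  let g := fun gamma : R =>
    specnorm (row_mx (rC gamma *: F1) (rC gamma^-1 *: F2)) ^+ 2 in
  let glo := Num.sqrt (beta / (2 * alpha)) in
  let gup := Num.sqrt (2 * beta / alpha) in
  let ggm := Num.sqrt (beta / alpha) in
  exists gmin : R,
    [/\ glo <= gmin <= gup,
        (forall gamma : R, 0 < gamma -> g gmin <= g gamma),
        (forall gamma : R, glo <= gamma <= gup -> g gmin <= g gamma)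
      & g gmin <= g ggm].
Proof.
move=> _ _ alpha beta g glo gup ggm.
have gE : forall x, g x = N F1 F2 x ^+ 2 by [].
have a0 : 0 <= alpha by apply: spec_ge0.
have b0 : 0 <= beta by apply: spec_ge0.
have Nlo : forall x, `|x| * alpha <= N F1 F2 x /\ `|x^-1| * beta <= N F1 F2 x.
  by move=> x; apply: N_lo.
have Nup : forall x, N F1 F2 x <= Num.sqrt ((`|x| * alpha) ^+ 2 + (`|x^-1| * beta) ^+ 2).
  by move=> x; apply: N_up.
have Nge0 : forall x, 0 <= N F1 F2 x by move=> x; apply: spec_ge0.
have Ncont : forall x, 0 < x -> {for x, continuous (N F1 F2)}.
  by move=> x; apply: N_cont.
move: gE Nlo Nup Nge0 Ncont.
clearbody g alpha beta.
move: (N F1 F2) => NN gE Nlo Nup Nge0 Ncont.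
have gge0 : forall x, 0 <= g x by move=> x; rewrite gE sqr_ge0.
have g0 : g 0 = 0.
  rewrite gE; have := Nup 0.
  rewrite invr0 normr0 !mul0r expr0n /= addr0 sqrtr0 => h.
  have h2 := Nge0 0.
  have -> : NN 0 = 0 by apply: le_anti; rewrite h h2.
  by rewrite expr0n.
have degen : glo = 0 -> gup = 0 -> ggm = 0 -> exists gmin : R,
    [/\ glo <= gmin <= gup,
        (forall gamma : R, 0 < gamma -> g gmin <= g gamma),
        (forall gamma : R, glo <= gamma <= gup -> g gmin <= g gamma)
      & g gmin <= g ggm].
  move=> h1 h2 h3; exists 0; rewrite h1 h2 h3 g0; split.
  - by rewrite lexx.
  - by move=> x _; apply: gge0.
  - by move=> x _; apply: gge0.
  - exact: lexx.
have [az|anz] := eqVneq alpha 0.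
  by apply: degen; [rewrite /glo|rewrite /gup|rewrite /ggm]; rewrite az ?(mulr0, invr0, mul0r) sqrtr0.
have [bz|bnz] := eqVneq beta 0.
  by apply: degen; [rewrite /glo|rewrite /gup|rewrite /ggm]; rewrite bz ?(mulr0, invr0, mul0r) sqrtr0.
have ap : 0 < alpha by rewrite lt_def anz.
have bp : 0 < beta by rewrite lt_def bnz.
have x0 : 0 < beta / alpha by rewrite divr_gt0.
have e1 : beta / (2 * alpha) = (beta / alpha) / 2 by field; rewrite gt_eqF.
have e2 : 2 * beta / alpha = 2 * (beta / alpha) by rewrite mulrA.
have q1 : 0 < beta / (2 * alpha) by rewrite e1 divr_gt0.
have q2 : 0 < 2 * beta / alpha by rewrite e2 mulr_gt0.
have r1 : beta / (2 * alpha) <= beta / alpha by rewrite e1; lra.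
have r2 : beta / alpha <= 2 * beta / alpha by rewrite e2; lra.
have glo_pos : 0 < glo by rewrite /glo sqrtr_gt0.
have lo_gm : glo <= ggm by rewrite /glo /ggm ler_sqrt ?(ltW x0).
have gm_up : ggm <= gup by rewrite /gup /ggm ler_sqrt ?(ltW q2).
have glo2 : glo ^+ 2 = beta / (2 * alpha) by rewrite /glo sqr_sqrtr // ltW.
have gup2 : gup ^+ 2 = 2 * beta / alpha by rewrite /gup sqr_sqrtr // ltW.
have ggm2 : ggm ^+ 2 = beta / alpha by rewrite /ggm sqr_sqrtr // ltW.
have ggm_pos : 0 < ggm by apply: lt_le_trans lo_gm.
have cont : {within `[glo, gup], continuous NN}.
  apply: continuous_in_subspaceT => x xin; apply: Ncont.
  move: xin; rewrite inE /= in_itv /= => /andP [h _]; exact: lt_le_trans h.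
have [c cin cmin] := EVT_min (le_trans lo_gm gm_up) cont.
have cin' : glo <= c <= gup by move: cin; rewrite in_itv.
have gmin_int : forall t, glo <= t <= gup -> g c <= g t.
  move=> t ht; rewrite !gE; apply: sq_le (Nge0 c) _; apply: cmin.
  by rewrite in_itv /= ht.
have gcgm : g c <= g ggm by apply: gmin_int; rewrite lo_gm gm_up.
have ggm_ub : g ggm <= 2 * alpha * beta.
  by rewrite gE; apply: ub_gm ap bp ggm_pos ggm2 (Nup ggm) (Nge0 ggm).
have gup0 : 0 <= gup by apply: ltW; apply: lt_le_trans glo_pos (le_trans lo_gm gm_up).
exists c; split => //.
move=> t t0; case: (lerP glo t) => h1; last first.
  apply: le_trans gcgm _; apply: le_trans ggm_ub _.
  by rewrite gE; apply: lo_small ap bp t0 (ltW h1) (ltW glo_pos) glo2 (Nlo t).2.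
case: (lerP t gup) => h2; first by apply: gmin_int; rewrite h1 h2.
apply: le_trans gcgm _; apply: le_trans ggm_ub _.
by rewrite gE; apply: hi_big ap bp (ltW h2) gup0 gup2 (Nlo t).1.
Qed.
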